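(* Let $V$ be a finite-dimensional $\Bbbk$-vector space and $\lambda$ a partition. The map $\mathrm{ad}\colon V\otimes\mathbb S_\lambda(V)\to\mathbb S_\lambda(\mathsf L_{(2)})$ induced by the Lie bracket is injective whenever $\lambda$ has at least two parts; when $\lambda=(n)$ with $n\ge1$, its kernel is isomorphic to $\mathbb S_{(n+1)}(V)=\mathrm{Sym}^{n+1}(V)$.
   Context: $\Bbbk$ is a field of characteristic $0$. $\mathsf L_{(2)}=V\oplus\bigwedge^2V$ is the free nilpotent Lie algebra of class $2$ on $V$. $\mathbb S_\lambda$ is the Schur functor; $\mathbb S_\lambda(V)\subset\mathbb S_\lambda(\mathsf L_{(2)})$ via $V\subset\mathsf L_{(2)}$, and $\mathsf L_{(2)}$ acts on $\mathbb S_\lambda(\mathsf L_{(2)})$ by functoriality from the adjoint action (so $X\in V$ acts as a derivation extending $Y\mapsto[X,Y]$); $\mathrm{ad}(X\otimes f)$ is the action of $X$ on $f$. *)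

(* Defs.v *)
From HB Require Import structures.
From mathcomp Require Import all_boot all_order all_fingroup all_algebra.
Set Implicit Arguments. Unset Strict Implicit. Unset Printing Implicit Defensive.
Import Order.TTheory GRing.Theory Num.Theory.
Local Open Scope ring_scope.

(* Conventions: V = F^d with standard basis e_0,...,e_(d-1), indexed by 'I_d.
   A tensor in W^{(x)m} (W a space with basis indexed by the finite type I)
   is its coordinate function on basis tensors e_(w_0) (x) ... (x) e_(w_(m-1)),
   i.e. an element of {ffun m.-tuple I -> F}. *)
Definition Tens (F : fieldType) (I : finType) (m : nat) : vectType F :=
  {ffun m.-tuple I -> F^o}.

Definition is_partition (lam : seq nat) : bool :=
  sorted geq lam && all (fun x => 0 < x)%N lam.

(* position (row, column) of the i-th box, boxes numbered row by row *)
Fixpoint cell (lam : seq nat) (i : nat) : nat * nat :=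
  match lam with
  | [::] => (0%N, i)
  | a :: l => if (i < a)%N then (0%N, i)
              else let rc := cell l (i - a) in (rc.1.+1, rc.2)
  end.

Definition rowGroup (lam : seq nat) : {set {perm 'I_(sumn lam)}} :=
  [set s : {perm 'I_(sumn lam)} | [forall i, (cell lam (s i)).1 == (cell lam i).1]].
Definition colGroup (lam : seq nat) : {set {perm 'I_(sumn lam)}} :=
  [set s : {perm 'I_(sumn lam)} | [forall i, (cell lam (s i)).2 == (cell lam i).2]].

Definition permT (F : fieldType) (I : finType) (m : nat) (s : {perm 'I_m})
  (t : Tens F I m) : Tens F I m :=
  [ffun w : m.-tuple I => t [tuple tnth w (s j) | j < m]].

Definition youngSym (F : fieldType) (I : finType) (lam : seq nat)
  (t : Tens F I (sumn lam)) : Tens F I (sumn lam) :=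
  \sum_(p in rowGroup lam) \sum_(q in colGroup lam)
     ((-1) ^+ odd_perm q : F) *: permT p (permT q t).

Definition SchurFun (F : fieldType) (I : finType) (lam : seq nat)
  : {vspace Tens F I (sumn lam)} :=
  limg (linfun (@youngSym F I lam)).

(* basis: inl i = e_i, inr (i,j) = e_i /\ e_j for i < j *)
Definition LIdx (d : nat) : finType :=
  ('I_d + {p : 'I_d * 'I_d | (p.1 < p.2)%N})%type.

(* structure constants: [b_a, b_b] = \sum_c br a b c * b_c *)
Definition br (F : fieldType) (d : nat) (a b c : LIdx d) : F :=
  match a, b, c with
  | inl i, inl j, inr p =>
      if val p == (i, j) then 1 else if val p == (j, i) then -1 else 0
  | _, _, _ => 0
  end.

(* the action of b_a on L^{(x)m} induced by the adjoint action (derivation) *)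
Definition actL (F : fieldType) (d m : nat) (a : LIdx d)
  (t : Tens F (LIdx d) m) : Tens F (LIdx d) m :=
  [ffun w : m.-tuple (LIdx d) =>
     \sum_(k < m) \sum_(b : LIdx d)
        br F a b (tnth w k) * t [tuple if j == k then b else tnth w j | j < m]].

Definition extT (F : fieldType) (d m : nat) (t : Tens F 'I_d m)
  : Tens F (LIdx d) m :=
  [ffun w : m.-tuple (LIdx d) =>
     \sum_(u : m.-tuple 'I_d) (if w == map_tuple inl u then t u else 0)].

(* V (x) V^{(x)m} is identified with V^{(x)(m+1)} (first factor = V) *)
Definition tens1 (F : fieldType) (d m : nat) (i : 'I_d) (f : Tens F 'I_d m)
  : Tens F 'I_d m.+1 :=
  [ffun w : m.+1.-tuple 'I_d => if thead w == i then f (behead_tuple w) else 0].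

Definition sliceT (F : fieldType) (d m : nat) (i : 'I_d) (t : Tens F 'I_d m.+1)
  : Tens F 'I_d m :=
  [ffun w : m.-tuple 'I_d => t [tuple of i :: w]].

(* ad : V (x) S_lam(V) -> S_lam(L),  X (x) f |-> X . f *)
Definition adMap (F : fieldType) (d m : nat) (t : Tens F 'I_d m.+1)
  : Tens F (LIdx d) m :=
  \sum_(i < d) actL (inl i) (extT (sliceT i t)).

(* the subspace V (x) S_lam(V) = \sum_i e_i (x) S_lam(V) *)
Definition VtensSchur (F : fieldType) (d : nat) (lam : seq nat)
  : {vspace Tens F 'I_d (sumn lam).+1} :=
  (\sum_(i < d) (linfun (@tens1 F d (sumn lam) i) @: (SchurFun F 'I_d lam)))%VS.

Definition adKer (F : fieldType) (d : nat) (lam : seq nat)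
  : {vspace Tens F 'I_d (sumn lam).+1} :=
  (VtensSchur F d lam :&: lker (linfun (@adMap F d (sumn lam))))%VS.

Definition glT (F : fieldType) (d m : nat) (g : 'M[F]_d) (t : Tens F 'I_d m)
  : Tens F 'I_d m :=
  [ffun w : m.-tuple 'I_d =>
     \sum_(u : m.-tuple 'I_d) (\prod_(k < m) g (tnth w k) (tnth u k)) * t u].

(* Main.v *)
Require Import Defs.
From HB Require Import structures.
From mathcomp Require Import all_boot all_order all_fingroup all_algebra.
Set Implicit Arguments. Unset Strict Implicit. Unset Printing Implicit Defensive.
Import Order.TTheory GRing.Theory Num.Theory.
Local Open Scope ring_scope.

Section Lin.
Variables (F : fieldType) (I : finType).

Lemma permT_lin m s : linear (@permT F I m s).
Proof. by move=> a x y; apply/ffunP=> w; rewrite !ffunE. Qed.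
HB.instance Definition _ m s := GRing.isLinear.Build F (Tens F I m) (Tens F I m) _ (@permT F I m s) (@permT_lin m s).

Lemma permT_mul m (s1 s2 : {perm 'I_m}) (t : Tens F I m) : permT s1 (permT s2 t) = permT (s2 * s1) t.
Proof.
apply/ffunP=> w; rewrite !ffunE; congr (t _); apply: eq_from_tnth => j.
by rewrite !tnth_map !tnth_ord_tuple permM.
Qed.

Lemma permT1 m (t : Tens F I m) : permT 1 t = t.
Proof.
apply/ffunP=> w; rewrite !ffunE; congr (t _); apply: eq_from_tnth => j.
by rewrite !tnth_map !tnth_ord_tuple perm1.
Qed.

Lemma young_lin lam : linear (@youngSym F I lam).
Proof.
move=> a x y; rewrite /youngSym scaler_sumr -big_split; apply: eq_bigr => p _.
rewrite scaler_sumr -big_split; apply: eq_bigr => q _.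
by rewrite !linearP /=.
Qed.
HB.instance Definition _ lam := GRing.isLinear.Build F _ _ _ (@youngSym F I lam) (@young_lin lam).

Definition Ssym m (t : Tens F I m) : Tens F I m := \sum_(s : {perm 'I_m}) permT s t.
Lemma Ssym_lin m : linear (@Ssym m).
Proof.
move=> a x y; rewrite /Ssym scaler_sumr -big_split; apply: eq_bigr => p _.
by rewrite linearP.
Qed.
HB.instance Definition _ m := GRing.isLinear.Build F _ _ _ (@Ssym m) (@Ssym_lin m).

Lemma Ssym_perm m s (t : Tens F I m) : Ssym (permT s t) = Ssym t.
Proof.
rewrite /Ssym [RHS](reindex_inj (mulgI s)) /=; apply: eq_bigr => p _.
by rewrite permT_mul.
Qed.

Definition symT m (t : Tens F I m) := forall s, permT s t = t.

Lemma Ssym_sym m (t : Tens F I m) : symT t -> Ssym t = (m`!)%:R *: t.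
Proof.
move=> st; rewrite /Ssym (eq_bigr (fun _ => t)) // sumr_const scaler_nat.
by rewrite -card_Sn.
Qed.

Lemma sym_Ssym m (t : Tens F I m) : symT (Ssym t).
Proof.
move=> s; rewrite /Ssym linear_sum /= [RHS](reindex_inj (mulIg s)) /=.
by apply: eq_bigr => p _; rewrite permT_mul.
Qed.
End Lin.


Section Young.
Variables (F : fieldType) (I : finType).
Hypothesis hF : [pchar F] =i pred0.

Lemma sum_sign_odd m (C : {set {perm 'I_m}}) (tau : {perm 'I_m}) :
  tau \in C -> odd_perm tau -> (forall q, ((tau * q)%g \in C) = (q \in C)) ->
  \sum_(q in C) ((-1) ^+ odd_perm q : F) = 0.
Proof.
move=> _ otau hC.
set S := \sum_(q in C) _.
have : S = - S.
  rewrite {1}/S (reindex_inj (mulgI tau)) /= -sumrN.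
  apply: eq_big => q; first by rewrite hC.
  by move=> _; rewrite odd_permM otau /= signrN.
move/eqP; rewrite -subr_eq0 opprK -mulr2n -mulr_natr mulf_eq0 => /orP[/eqP //|].
by move/pcharf0P: hF => ->.
Qed.

Lemma Ssym_young0 a b l (y : Tens F I (sumn [:: a, b & l])) :
  (0 < a)%N -> (0 < b)%N -> Ssym (youngSym y) = 0.
Proof.
move=> a0 b0.
set lam := [:: a, b & l].
have h0 : (0 < sumn lam)%N by rewrite /= addn_gt0 a0.
have ha : (a < sumn lam)%N by rewrite /= -{1}(addn0 a) ltn_add2l addn_gt0 b0.
pose i0 : 'I_(sumn lam) := Ordinal h0.
pose ia : 'I_(sumn lam) := Ordinal ha.
pose tau := tperm i0 ia.
have c0 : cell lam i0 = (0%N, 0%N) by rewrite /= a0.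
have ca : cell lam ia = (1%N, 0%N) by rewrite /= ltnn subnn b0.
have tauC : tau \in colGroup lam.
  rewrite inE; apply/forallP => i; rewrite /tau.
  by case: tpermP => [->|->|//]; rewrite ?ca ?c0.
have hC : forall q, ((tau * q)%g \in colGroup lam) = (q \in colGroup lam).
  have key : forall q, q \in colGroup lam -> (tau * q)%g \in colGroup lam.
    move=> q; rewrite !inE => /forallP qC; apply/forallP => i.
    rewrite permM (eqP (qC _)); move: tauC; rewrite inE => /forallP /(_ i) /eqP.
    by move=> ->.
  move=> q; apply/idP/idP; last exact: key.
  by move/key; rewrite /tau tpermKg.
have otau : odd_perm tau by rewrite odd_tperm -val_eqE /= eq_sym -lt0n a0.
rewrite /youngSym linear_sum /= big1 // => p _.
rewrite linear_sum /=.
under eq_bigr => q _ do rewrite linearZ /= !Ssym_perm.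
by rewrite -scaler_suml (sum_sign_odd tauC otau hC) scale0r.
Qed.

Lemma young_row k (y : Tens F I (sumn [:: k])) : youngSym y = Ssym y.
Proof.
have ltk : forall j : 'I_(sumn [:: k]), (j < k)%N.
  by move=> j; case: j => j /=; rewrite addn0.
have hc : colGroup [:: k] = [set 1%g].
  apply/setP => s; rewrite !inE; apply/forallP/eqP => [h | -> i]; last by rewrite perm1.
  apply/permP => i; rewrite perm1; apply: val_inj => /=.
  by have := h i; rewrite /= !ltk => /eqP.
have hr : rowGroup [:: k] = setT.
  apply/setP => s; rewrite !inE; apply/forallP => i.
  by rewrite /= !ltk.
rewrite /youngSym hr hc /Ssym; apply: eq_big => [p|p _]; first by rewrite inE.
by rewrite big_set1 odd_perm1 expr0 scale1r permT1.
Qed.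
End Young.


Section Tens.
Variables (F : fieldType) (d : nat).

Lemma tens1_lin m i : linear (@tens1 F d m i).
Proof. by move=> a x y; apply/ffunP=> w; rewrite !ffunE; case: ifP =>/= _; rewrite ?ffunE /= ?scaler0 ?addr0. Qed.
HB.instance Definition _ m i := GRing.isLinear.Build F _ _ _ (@tens1 F d m i) (@tens1_lin m i).

Lemma sliceT_lin m i : linear (@sliceT F d m i).
Proof. by move=> a x y; apply/ffunP=> w; rewrite !ffunE. Qed.
HB.instance Definition _ m i := GRing.isLinear.Build F _ _ _ (@sliceT F d m i) (@sliceT_lin m i).

Lemma slice_tens1 m i j (f : Tens F 'I_d m) :
  sliceT j (tens1 i f) = if i == j then f else 0.
Proof.
apply/ffunP => w; rewrite !ffunE theadE eq_sym.
case: eqP => _; last by rewrite ffunE.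
by congr (f _); apply: val_inj.
Qed.

Lemma tens1_slice m (t : Tens F 'I_d m.+1) : t = \sum_i tens1 i (sliceT i t).
Proof.
apply/ffunP => w; rewrite sum_ffunE (bigD1 (thead w)) //= big1 ?addr0.
  rewrite !ffunE eqxx; congr (t _); exact: tuple_eta.
by move=> i /negPf ni; rewrite ffunE eq_sym ni.
Qed.

Lemma memSchur (I : finType) lam (x : Tens F I (sumn lam)) :
  reflect (exists y, x = youngSym y) (x \in SchurFun F I lam).
Proof.
rewrite /SchurFun; apply: (iffP memv_imgP) => [[y _ ->]|[y ->]]; exists y; rewrite ?lfunE //.
by rewrite memvf.
Qed.

Lemma VtS_slice lam (t : Tens F 'I_d (sumn lam).+1) :
  t \in VtensSchur F d lam -> forall j, sliceT j t \in SchurFun F 'I_d lam.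
Proof.
move=> /memv_sumP [vs hv ->] j; rewrite linear_sum /=.
rewrite (bigD1 j) //= big1 ?addr0.
  by have /memv_imgP [f hf ->] := hv j isT; rewrite lfunE /= slice_tens1 eqxx.
move=> i ij; have /memv_imgP [f hf ->] := hv i isT.
by rewrite lfunE /= slice_tens1 (negPf ij).
Qed.

Lemma slice_VtS lam (t : Tens F 'I_d (sumn lam).+1) :
  (forall j, sliceT j t \in SchurFun F 'I_d lam) -> t \in VtensSchur F d lam.
Proof.
move=> h; rewrite [t]tens1_slice; apply: memv_sumr => i _.
have -> : tens1 i (sliceT i t) = linfun (@tens1 F d (sumn lam) i) (sliceT i t) by rewrite lfunE.
exact: memv_img.
Qed.

Lemma sym_slice m (t : Tens F 'I_d m.+1) i : symT t -> symT (sliceT i t).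
Proof.
move=> st s; apply/ffunP => w; rewrite !ffunE.
transitivity (permT (lift_perm ord0 ord0 s) t [tuple of i :: w]); last by rewrite st.
rewrite ffunE; congr (t _).
apply: eq_from_tnth => j; rewrite !tnth_map !tnth_ord_tuple.
case: (unliftP ord0 j) => [j'|] ->.
  by rewrite lift_perm_lift !tnthS tnth_map tnth_ord_tuple.
by rewrite lift_perm_id !tnth0.
Qed.

Lemma slices0 m (t : Tens F 'I_d m.+1) : (forall i, sliceT i t = 0) -> t = 0.
Proof.
move=> h; rewrite [t]tens1_slice big1 // => i _; by rewrite h linear0.
Qed.
End Tens.


Section Ad.
Variables (F : fieldType) (d : nat).

Definition repl (T : Type) m (u : m.-tuple T) (k : 'I_m) (a : T) : m.-tuple T :=
  [tuple if j == k then a else tnth u j | j < m].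

Lemma tnth_repl T m (u : m.-tuple T) k a j : tnth (repl u k a) j = if j == k then a else tnth u j.
Proof. by rewrite tnth_map tnth_ord_tuple. Qed.

Lemma repl_repl T m (u : m.-tuple T) k a c : repl (repl u k c) k a = repl u k a.
Proof. by apply: eq_from_tnth => j; rewrite !tnth_repl; case: eqP. Qed.

Lemma repl_id T m (u : m.-tuple T) k : repl u k (tnth u k) = u.
Proof. by apply: eq_from_tnth => j; rewrite !tnth_repl; case: eqP => [->|]. Qed.

Lemma repl_k T m (u : m.-tuple T) k a : tnth (repl u k a) k = a.
Proof. by rewrite tnth_repl eqxx. Qed.

Lemma swap_cons T m (u : m.-tuple T) k a :
  [tuple tnth [tuple of a :: u] (tperm ord0 (lift ord0 k) j) | j < m.+1]
  = [tuple of tnth u k :: repl u k a].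
Proof.
apply: eq_from_tnth => j; rewrite tnth_map tnth_ord_tuple.
case: (unliftP ord0 j) => [j'|] ->; last by rewrite tpermL tnthS tnth0.
rewrite tnthS tnth_repl.
case: (eqVneq j' k) => [->|njk]; first by rewrite tpermR tnth0.
by rewrite tpermD ?tnthS // (inj_eq (@lift_inj _ ord0)) eq_sym.
Qed.

Lemma extT_lin m : linear (@extT F d m).
Proof.
move=> a x y; apply/ffunP=> w; rewrite !ffunE scaler_sumr -big_split.
apply: eq_bigr => u _; case: ifP => _; rewrite ?ffunE // scaler0; exact: (esym (addr0 _)).
Qed.
HB.instance Definition _ m := GRing.isLinear.Build F _ _ _ (@extT F d m) (@extT_lin m).

Lemma actL_lin m b : linear (@actL F d m b).
Proof.
move=> a x y; apply/ffunP=> w; rewrite !ffunE scaler_sumr -big_split.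
apply: eq_bigr => k _; rewrite scaler_sumr -big_split; apply: eq_bigr => c _.
by rewrite !ffunE mulrDr mulrCA.
Qed.
HB.instance Definition _ m b := GRing.isLinear.Build F _ _ _ (@actL F d m b) (@actL_lin m b).

Lemma adMap_lin m : linear (@adMap F d m).
Proof.
move=> a x y; rewrite /adMap scaler_sumr -big_split; apply: eq_bigr => i _.
by rewrite !linearP.
Qed.
HB.instance Definition _ m := GRing.isLinear.Build F _ _ _ (@adMap F d m) (@adMap_lin m).

Lemma extT_inl m (f : Tens F 'I_d m) u : extT f (map_tuple inl u) = f u.
Proof.
rewrite ffunE (bigD1 u) //= eqxx big1 ?addr0 // => u' nu.
case: eqP => // /(congr1 val) /= /(inj_map (@inl_inj _ _)) h.
by move: nu; rewrite (val_inj h) eqxx.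
Qed.

Lemma extT_notinl m (f : Tens F 'I_d m) v j q : tnth v j = inr q -> extT f v = 0.
Proof.
move=> hj; rewrite ffunE big1 // => u _; case: eqP => // hv.
by move: hj; rewrite hv tnth_map.
Qed.

Definition Gk m (t : Tens F 'I_d m.+1) (k : 'I_m) (w : m.-tuple (LIdx d)) : F :=
  \sum_(i < d) \sum_(b : LIdx d) br F (inl i) b (tnth w k) *
     extT (sliceT i t) [tuple if j == k then b else tnth w j | j < m].

Lemma adMap_coord m (t : Tens F 'I_d m.+1) w : adMap t w = \sum_k Gk t k w.
Proof.
rewrite /adMap sum_ffunE; under eq_bigr => i _ do rewrite ffunE.
by rewrite exchange_big.
Qed.

Lemma Gk_inl m (t : Tens F 'I_d m.+1) k w x : tnth w k = inl x -> Gk t k w = 0.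
Proof.
by move=> h; rewrite /Gk big1 // => i _; rewrite big1 // => b _; rewrite h; case: b => *; rewrite mul0r.
Qed.

Lemma sum_delta (a : 'I_d) (G : 'I_d -> F) : \sum_i ((i == a)%:R * G i) = G a.
Proof.
by rewrite (bigD1 a) //= eqxx mul1r big1 ?addr0 // => i /negPf ->; rewrite mul0r.
Qed.

Lemma sum_br (a c : 'I_d) (ac : a != c) (E : 'I_d -> 'I_d -> F) :
  \sum_i \sum_j ((if (a, c) == (i, j) then 1 else if (a, c) == (j, i) then -1 else 0) * E i j)
  = E a c - E c a.
Proof.
have inner : forall i, \sum_j ((if (a, c) == (i, j) then 1 else if (a, c) == (j, i) then -1 else 0) * E i j)
   = (i == a)%:R * E i c - (i == c)%:R * E i a.
  move=> i; case: (eqVneq i a) => [->|nia].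
    rewrite (negPf ac) mul1r mul0r subr0 (bigD1 c) //= eqxx mul1r big1 ?addr0 // => j njc.
    rewrite xpair_eqE eqxx /= eq_sym (negPf njc) xpair_eqE.
    by rewrite [c == a]eq_sym (negPf ac) andbF mul0r.
  case: (eqVneq i c) => [->|nic].
    rewrite mul0r sub0r mul1r (bigD1 a) //= !xpair_eqE (negPf ac) !eqxx /=.
    rewrite mulN1r big1 ?addr0 // => j nja.
    by rewrite !xpair_eqE (negPf ac) [a == j]eq_sym (negPf nja) /= mul0r.
  rewrite !mul0r subr0 big1 // => j _.
  rewrite xpair_eqE eq_sym (negPf nia) /= xpair_eqE [c == i]eq_sym (negPf nic) andbF.
  by rewrite mul0r.
rewrite (eq_bigr _ (fun i _ => inner i)) sumrB !sum_delta //.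
Qed.

Lemma Gk_inr m (t : Tens F 'I_d m.+1) k w (p : {p : 'I_d * 'I_d | (p.1 < p.2)%N}) :
  tnth w k = inr p ->
  Gk t k w = extT (sliceT (val p).1 t) [tuple if j == k then inl (val p).2 else tnth w j | j < m]
           - extT (sliceT (val p).2 t) [tuple if j == k then inl (val p).1 else tnth w j | j < m].
Proof.
move=> h; rewrite /Gk h.
have ac : (val p).1 != (val p).2 by rewrite neq_ltn (svalP p).
rewrite -(sum_br ac (fun i j => extT (sliceT i t) [tuple if j0 == k then inl j else tnth w j0 | j0 < m])).
apply: eq_bigr => i _; rewrite big_sumType /= [X in _ + X]big1 ?addr0; last first.
  by move=> q _; rewrite mul0r.
apply: eq_bigr => j _; case: p h ac => [[a c] /=] ac h _.
by [].
Qed.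
End Ad.


Section Sym.
Variables (F : fieldType) (d : nat).

Lemma wk_map m (u : m.-tuple 'I_d) k (p : LIdx d) j :
  [tuple if j0 == k then inl j else tnth [tuple if j1 == k then p else inl (tnth u j1) | j1 < m] j0 | j0 < m]
  = map_tuple inl (repl u k j) :> m.-tuple (LIdx d).
Proof.
apply: eq_from_tnth => j0; rewrite tnth_mktuple [RHS]tnth_map tnth_repl.
by case: eqP => // /eqP nj; rewrite tnth_mktuple (negPf nj).
Qed.

Lemma ad0_swap m (t : Tens F 'I_d m.+1) : adMap t = 0 ->
  forall k (u : m.-tuple 'I_d) a c,
    t [tuple of a :: repl u k c] = t [tuple of c :: repl u k a].
Proof.
move=> h0 k u.
suff H : forall a c : 'I_d, (a < c)%N -> t [tuple of a :: repl u k c] = t [tuple of c :: repl u k a].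
  move=> a c; case: (ltngtP a c) => [/H //|/H //|/val_inj -> //].
move=> a c ac.
pose p : {p : 'I_d * 'I_d | (p.1 < p.2)%N} := exist _ (a, c) ac.
pose w := [tuple if j1 == k then inr p else inl (tnth u j1) | j1 < m] : m.-tuple (LIdx d).
have := congr1 (fun f : Tens F (LIdx d) m => f w) h0; rewrite /= ffunE adMap_coord (bigD1 k) //= big1 ?addr0; last first.
  by move=> k' nk; apply: (@Gk_inl _ _ _ _ _ _ (tnth u k')); rewrite tnth_map tnth_ord_tuple (negPf nk).
rewrite (@Gk_inr _ _ _ _ _ _ p); last by rewrite tnth_map tnth_ord_tuple eqxx.
rewrite /= !wk_map !extT_inl !ffunE => /eqP; rewrite subr_eq0 => /eqP.
by move=> ->.
Qed.

Lemma ad0_swapT m (t : Tens F 'I_d m.+1) : adMap t = 0 ->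
  forall k, permT (tperm ord0 (lift ord0 k)) t = t.
Proof.
move=> h0 k; apply/ffunP => x; case/tupleP: x => a u.
rewrite ffunE swap_cons (ad0_swap h0) repl_id.
by congr (t _); apply: val_inj.
Qed.

Lemma permT_closed m (t : Tens F 'I_d m) (s1 s2 : {perm 'I_m}) :
  permT s1 t = t -> permT s2 t = t -> permT (s1 * s2) t = t.
Proof. by move=> h1 h2; rewrite -permT_mul h1 h2. Qed.

Lemma swaps_sym m (t : Tens F 'I_d m.+1) :
  (forall k, permT (tperm ord0 (lift ord0 k)) t = t) -> symT t.
Proof.
move=> hs.
have h0 : forall y, permT (tperm ord0 y) t = t.
  move=> y; case: (unliftP ord0 y) => [y'|] ->; first exact: hs.
  by rewrite tperm1 permT1.
have ht : forall x y, permT (tperm x y) t = t.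
  move=> x y; case: (unliftP ord0 x) => [x'|] ->; last exact: h0.
  case: (unliftP ord0 y) => [y'|] ->; last by rewrite tpermC; exact: h0.
  case: (eqVneq x' y') => [->|nxy]; first by rewrite tperm1 permT1.
  have e : tperm (lift ord0 x') (lift ord0 y') =
     (tperm ord0 (lift ord0 y') ^ tperm ord0 (lift ord0 x'))%g.
    rewrite tpermJ tpermL tpermD //.
  by rewrite e conjgE !permT_closed // tpermV.
move=> s; have [ts -> _] := prod_tpermP s.
elim: ts => [|[x y] ts IH]; first by rewrite big_nil permT1.
by rewrite big_cons permT_closed.
Qed.

Definition isl (x : LIdx d) := if x is inl _ then true else false.

Lemma sym_ad0 m (t : Tens F 'I_d m.+1) : symT t -> adMap t = 0.
Proof.
move=> st; apply/ffunP => w; rewrite adMap_coord ffunE big1 // => k _.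
case hk: (tnth w k) => [x|p]; first exact: Gk_inl hk.
rewrite (Gk_inr _ hk).
case: p hk => [[a c] /= ac] hk.
case: (boolP [forall j, (j != k) ==> isl (tnth w j)]) => [/forallP hall | hn].
  pose u := [tuple if tnth w j is inl z then z else a | j < m].
  have ew : forall b, [tuple if j == k then inl b else tnth w j | j < m]
                      = map_tuple inl (repl u k b) :> m.-tuple (LIdx d).
    move=> b; apply: eq_from_tnth => j; rewrite tnth_map tnth_ord_tuple tnth_map tnth_repl.
    case: eqP => // /eqP njk; rewrite tnth_map tnth_ord_tuple.
    by have := hall j; rewrite njk /=; case: (tnth w j).
  rewrite !ew !extT_inl !ffunE; apply/eqP; rewrite subr_eq0; apply/eqP.
  have := st (tperm ord0 (lift ord0 k)) => /(congr1 (fun f : Tens F 'I_d m.+1 => f [tuple of a :: repl u k c])).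
  rewrite ffunE swap_cons repl_k repl_repl => <-.
  by congr (t _); apply: val_inj.
move: hn; rewrite negb_forall => /existsP [j0]; rewrite negb_imply => /andP [nj0 hj].
case hw : (tnth w j0) hj => [//|q] _.
rewrite !(@extT_notinl _ _ _ _ _ j0 q) ?subrr //; rewrite tnth_map tnth_ord_tuple (negPf nj0) //.
Qed.
End Sym.


Lemma fact_neq0 (F : fieldType) (hF : [pchar F] =i pred0) m : (m`!)%:R != 0 :> F.
Proof. by move/pcharf0P: hF => ->; rewrite -lt0n fact_gt0. Qed.

Lemma schur_row (F : fieldType) (hF : [pchar F] =i pred0) (I : finType) k (x : Tens F I (sumn [:: k])) :
  (x \in SchurFun F I [:: k]) <-> symT x.
Proof.
split.
  by move/memSchur => [y ->]; rewrite young_row; exact: sym_Ssym.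
move=> sx; apply/memSchur; exists (((sumn [:: k])`!)%:R^-1 *: x).
by rewrite young_row linearZ /= Ssym_sym // scalerA mulVf ?scale1r // fact_neq0.
Qed.

Lemma sym_schur0 (F : fieldType) (hF : [pchar F] =i pred0) (I : finType) a b l
  (x : Tens F I (sumn [:: a, b & l])) :
  (0 < a)%N -> (0 < b)%N -> x \in SchurFun F I [:: a, b & l] -> symT x -> x = 0.
Proof.
move=> a0 b0 /memSchur [y ey] sx.
have : ((sumn [:: a, b & l])`!)%:R *: x = 0.
  by rewrite -Ssym_sym // ey Ssym_young0.
by move/eqP; rewrite scaler_eq0 (negPf (fact_neq0 hF _)) /= => /eqP.
Qed.

Unset Implicit Arguments.
Theorem mainTheorem15 (F : fieldType) (hF : [pchar F] =i pred0)
  (d : nat) (lam : seq nat) (hlam : is_partition lam) :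
  ((2 <= size lam)%N -> adKer F d lam = 0%VS) /\
  (forall n : nat, lam = [:: n] -> (0 < n)%N ->
     exists f : 'Hom(Tens F 'I_d (sumn [:: n.+1]), Tens F 'I_d (sumn lam).+1),
       [/\ (f @: (SchurFun F 'I_d [:: n.+1]))%VS = adKer F d lam,
           (lker f :&: SchurFun F 'I_d [:: n.+1])%VS = 0%VS &
           forall g : 'M[F]_d, g \in unitmx ->
             forall x, x \in SchurFun F 'I_d [:: n.+1] ->
               f (glT g x) = glT g (f x)]).
Proof.
split.
  case: lam hlam => [|a [|b l]] //= hlam _.
  move: hlam; rewrite /is_partition /= => /andP [_ /and3P [a0 b0 _]].
  apply/eqP; rewrite -subv0; apply/subvP => t; rewrite memv_cap => /andP [ht].
  rewrite memv_ker lfunE /= => /eqP h0.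
  have st := swaps_sym (ad0_swapT h0).
  suff -> : t = 0 by exact: mem0v.
  apply: slices0 => i; apply: (sym_schur0 hF a0 b0).
    exact: VtS_slice.
  exact: sym_slice.
move=> n -> n0.
exists \1%VF; split; last first.
- by move=> g _ x _; rewrite !id_lfunE.
- apply/eqP; rewrite -subv0; apply/subvP => x; rewrite memv_cap memv_ker id_lfunE.
  by move=> /andP [/eqP -> _]; exact: mem0v.
rewrite lim1g; apply/vspaceP => t.
rewrite memv_cap memv_ker lfunE /=.
apply/idP/idP.
  move=> ht; have st : symT t := iffLR (@schur_row F hF 'I_d n.+1 t) ht; apply/andP; split; last by rewrite sym_ad0.
  apply: (@slice_VtS F d [:: n] t) => j.
  apply/(@schur_row F hF 'I_d n (sliceT j t)); exact: sym_slice.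
move=> /andP [_ /eqP h0]; apply/(@schur_row F hF 'I_d n.+1 t).
exact: swaps_sym (ad0_swapT h0).
Qed.
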